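(* Let $Y_1,Y_2,\ldots$ be i.i.d. Bernoulli$(1/2)$ and let $(Z^k)_k$ be generated by the bit-drop scheme described in the context, independently of $(Y_i)$. For integers $l\ge 1,k\ge 0$ let $L^a_l(k)$ be the length of a longest common subsequence of $Z^k$ and $Y_1\ldots Y_l$. Let $\delta:\mathbb{R}\to\mathbb{R}$ be a function with $\lim_{\epsilon\to0}\delta(\epsilon)=0$ such that for every $\epsilon>0$ there exist $c,C>0$ with $P\big(L^a_l(\lfloor 2l(1-\delta(\epsilon))\rfloor)>l(1-\epsilon)\big)\le Ce^{-cl}$ for all $l>0$. Let $\epsilon>0$ be such that $$\frac{0.5}{1-\delta(\epsilon)}<0.65.$$ Define $E^n_3:=\bigcap_{l=\lceil0.2n\rceil}^n\{L^a_l(\lfloor 2l(1-\delta(\epsilon))\rfloor)\le(1-\epsilon)l\}$, $E^n_{4k}:=\{L^a_n(k)\ge 0.65k\}$, $E^n_4:=\bigcap_{k=\lceil 0.45n\rceil}^n E^n_{4k}$, and $$E^n_{6k}:=\{L^a_n(k)\leq(1-\epsilon)\,\eta(L^a_n(k))\ \text{for all }(\pi,\eta)\in M^k\},\qquad E^n_6:=\bigcap_{k=\lceil0.45n\rceil}^nE^n_{6k}.$$ Then for all $k>0.45n$ (with $k\le n$), $E^n_3\cap E^n_{4k}\subset E^n_{6k}$, and consequently $E^n_3\cap E^n_4\subset E^n_6$.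
   Context: Bit-drop scheme: let $V_1,V_2,\ldots$ be i.i.d. Bernoulli$(1/2)$ and let $T_3,T_4,\ldots$ be independent, independent of $(V_k)$, with $T_{k+1}$ uniform on $\{2,\ldots,k\}$. Set $Z^2:=V_1V_2$ and, given $Z^k=Z^k_1\ldots Z^k_k$, define $Z^{k+1}_j:=Z^k_j$ for $j<T_{k+1}$, $Z^{k+1}_{T_{k+1}}:=V_{k+1}$, $Z^{k+1}_j:=Z^k_{j-1}$ for $T_{k+1}<j\le k+1$. A pair of matching subsequences of $Z^k$ and $Y_1\ldots Y_n$ of length $m$ is a pair $(\pi,\eta)$ of strictly increasing maps $\pi:\{1,\ldots,m\}\to\{1,\ldots,k\}$, $\eta:\{1,\ldots,m\}\to\{1,\ldots,n\}$ with $Z^k_{\pi(i)}=Y_{\eta(i)}$ for all $i$. Let $M^k_2$ be the set of such pairs of maximal length (length $L^a_n(k)$). Order pairs of the same length componentwise: $(\pi_1,\eta_1)\le(\pi_2,\eta_2)$ iff $\pi_1(i)\le\pi_2(i)$ and $\eta_1(i)\le\eta_2(i)$ for all $i$. Let $M^k\subset M^k_2$ be the set of minimal elements of $M^k_2$ for this partial order. *)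

(* Defs.v *)
From HB Require Import structures.
From mathcomp Require Import all_boot all_order all_algebra.
From mathcomp Require Import all_classical all_reals all_analysis.
Set Implicit Arguments. Unset Strict Implicit. Unset Printing Implicit Defensive.
Import Order.TTheory GRing.Theory Num.Theory.

Local Open Scope classical_set_scope.

(* insert bit b so that it becomes the t-th letter (1-based) of the result *)
Definition ins_at (t : nat) (b : bool) (s : seq bool) : seq bool :=
  take t.-1 s ++ b :: drop t.-1 s.

(* Z^k built from V_1 V_2 ... and T_3 T_4 ... (1-based indices).  Convention for k < 2: Z^0 = empty word, Z^1 = V_1. *)
Fixpoint Zword (V : nat -> bool) (T : nat -> nat) (k : nat) : seq bool :=
  match k with
  | 0 => [::]
  | k'.+1 => if k' < 2 then rcons (Zword V T k') (V k)
             else ins_at (T k) (V k) (Zword V T k')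
  end.

Definition Yword (Y : nat -> bool) (n : nat) : seq bool := mkseq (fun i => Y i.+1) n.

Definition lcs (s t : seq bool) : nat :=
  \max_(m < (size s).+1 | [exists w : m.-tuple bool, subseq w s && subseq w t]) m.

(* A pair (pi, eta) of strictly increasing maps {1..m} -> {1..size s},
   {1..m} -> {1..size t} with s_{pi(i)} = t_{eta(i)}; pi(i) is the
   (i-1)-th entry of the list p (likewise eta and q). *)
Definition matching_pair (s t : seq bool) (p q : seq nat) : Prop :=
  [/\ size p = size q, sorted ltn p, sorted ltn q,
      all (fun i => 0 < i <= size s) p &
      all (fun j => 0 < j <= size t) q] /\
      forall i, i < size p -> nth false s (nth 0 p i).-1 = nth false t (nth 0 q i).-1.

Definition maximal_pair (s t : seq bool) (p q : seq nat) : Prop :=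
  matching_pair s t p q /\ size p = lcs s t.

Definition pair_le (p1 q1 p2 q2 : seq nat) : Prop :=
  size p1 = size p2 /\ size q1 = size q2 /\
  forall i, i < size p1 -> nth 0 p1 i <= nth 0 p2 i /\ nth 0 q1 i <= nth 0 q2 i.

(* M : minimal elements of M_2 *)
Definition minimal_pair (s t : seq bool) (p q : seq nat) : Prop :=
  maximal_pair s t p q /\
  forall p' q', maximal_pair s t p' q' -> pair_le p' q' p q -> p' = p /\ q' = q.

Inductive rv_idx := IY of nat | IV of nat | IT of nat.

Definition rv_idx_code (x : rv_idx) : nat + nat + nat :=
  match x with IY i => inl (inl i) | IV i => inl (inr i) | IT i => inr i end.
Definition rv_idx_decode (x : nat + nat + nat) : rv_idx :=
  match x with inl (inl i) => IY i | inl (inr i) => IV i | inr i => IT i end.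
Lemma rv_idx_codeK : cancel rv_idx_code rv_idx_decode. Proof. by case. Qed.
HB.instance Definition _ := Equality.copy rv_idx (can_type rv_idx_codeK).

Definition rv_idx_ok (x : rv_idx) : bool :=
  match x with IY i => 0 < i | IV i => 0 < i | IT i => 2 < i end.

(* value of the variable with index x (booleans coded as 0/1) *)
Definition rv_val (Y V : nat -> bool) (T : nat -> nat) (x : rv_idx) : nat :=
  match x with IY i => Y i | IV i => V i | IT i => T i end.

Definition all_independent {R : realType} {d : measure_display}
  {Omega : measurableType d} (P : probability Omega R)
  (Y V : nat -> Omega -> bool) (T : nat -> Omega -> nat) : Prop :=
  forall (s : seq rv_idx) (x : rv_idx -> nat),
    uniq s -> all rv_idx_ok s ->
    P (\bigcap_(i in [set i | i \in s])
         [set w | rv_val (Y ^~ w) (V ^~ w) (T ^~ w) i = x i]) =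
    (\prod_(i <- s) P [set w | rv_val (Y ^~ w) (V ^~ w) (T ^~ w) i = x i])%E.

Definition La {Omega : Type} (Y V : nat -> Omega -> bool) (T : nat -> Omega -> nat)
  (l k : nat) (w : Omega) : nat :=
  lcs (Zword (V ^~ w) (T ^~ w) k) (Yword (Y ^~ w) l).

(* Main.v *)
Require Import Defs.
From HB Require Import structures.
From mathcomp Require Import all_boot all_order all_algebra.
From mathcomp Require Import all_classical all_reals all_analysis.
From mathcomp Require Import lra.
Import Order.TTheory GRing.Theory Num.Theory.
Local Open Scope ring_scope.
Local Open Scope classical_set_scope.

Lemma lcs_ub (s t w : seq bool) : subseq w s -> subseq w t -> (size w <= lcs s t)%N.
Proof.
move=> ws wt; rewrite /lcs.
have hw : (size w < (size s).+1)%N by rewrite ltnS size_subseq.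
apply: (@leq_bigmax_cond _ _ (fun m : 'I_(size s).+1 => nat_of_ord m) (Ordinal hw)) => /=.
apply/existsP; exists (in_tuple w); by rewrite /= ws wt.
Qed.

Lemma lcs_le_size (s t : seq bool) : (lcs s t <= size t)%N.
Proof.
rewrite /lcs; apply/bigmax_leqP => m /existsP [w /andP [_ wt]].
by rewrite -(size_tuple w) size_subseq.
Qed.

Lemma lcs_mono (s s' t : seq bool) : subseq s s' -> (lcs s t <= lcs s' t)%N.
Proof.
move=> ss; rewrite /lcs; apply/bigmax_leqP => m /existsP [w /andP [ws wt]].
rewrite -(size_tuple w); apply: lcs_ub => //; exact: subseq_trans ws ss.
Qed.

Lemma Zword_step V T k : subseq (Zword V T k) (Zword V T k.+1).
Proof.
rewrite /=; case: ifP => _; first exact: subseq_rcons.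
rewrite /ins_at; set s := Zword V T k.
rewrite -{1}(cat_take_drop (T k.+1).-1 s).
by apply: cat_subseq => //; apply: subseq_cons.
Qed.

Lemma Zword_mono V T k k' : (k <= k')%N -> subseq (Zword V T k) (Zword V T k').
Proof.
move/subnK => <-; elim: (k' - k)%N => [|j IH] //=.
exact: subseq_trans IH (Zword_step _ _ _).
Qed.

Lemma sub_nth (s : seq bool) (p : seq nat) off :
  sorted ltn p -> all (fun i => off <= i < off + size s)%N p ->
  subseq (map (fun i => nth false s (i - off)) p) s.
Proof.
elim: s p off => [|x s IH] [|i p] off //.
- by rewrite /= addn0 => _ /andP [/andP [a b] _]; move: (leq_ltn_trans a b); rewrite ltnn.
rewrite [sorted _ _]/= [all _ _]/=.
move=> hp /andP [/andP [hi1 hi2] ha].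
have hmin : all (ltn i) p by exact: (order_path_min ltn_trans hp).
have ha' : all (fun j => off.+1 <= j < off.+1 + size s)%N p.
  apply/allP => j jp; move/allP: ha => /(_ j jp) /andP [_ h2].
  move/allP: hmin => /(_ j jp) ij; rewrite addSnnS h2 andbT; exact: leq_ltn_trans hi1 ij.
have hmap : map (fun j => nth false (x :: s) (j - off)) p =
            map (fun j => nth false s (j - off.+1)) p.
  apply/eq_in_map => j jp; move/allP: ha' => /(_ j jp) /andP [h1 _].
  by rewrite -(subnSK h1).
rewrite map_cons hmap.
have hs : sorted ltn p by exact: path_sorted hp.
case: (eqVneq i off) => [->|ne].
- by rewrite subnn /= eqxx; apply: IH.
- have -> : nth false (x :: s) (i - off) = nth false s (i - off.+1).
    have h : (off < i)%N by rewrite ltn_neqAle eq_sym ne hi1.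
    by rewrite -(subnSK h).
  apply: subseq_trans (subseq_cons _ x); apply: (IH (i :: p)) => //=.
  rewrite ha' andbT addSnnS hi2 andbT ltn_neqAle eq_sym ne hi1 //.
Qed.

Lemma path_last (x : nat) q : path ltn x q -> forall y, y \in x :: q -> (y <= last x q)%N.
Proof.
elim: q x => [|a q IH] x /=.
  by move=> _ y; rewrite inE => /eqP ->.
move=> /andP [xa pq] y; rewrite inE => /orP [/eqP ->|yq].
  apply: leq_trans (ltnW xa) _; apply: IH => //; exact: mem_head.
exact: IH.
Qed.

Lemma sorted_le_last (q : seq nat) j : sorted ltn q -> j \in q -> (j <= last 0 q)%N.
Proof. case: q => [|a q] //= hp jq; exact: path_last. Qed.

Lemma last_le (q : seq nat) m : all (fun j => 0 < j <= m)%N q -> (last 0 q <= m)%N.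
Proof.
case: q => [|a q] //= /andP [ha hq].
have : last a q \in a :: q by exact: mem_last.
rewrite inE => /orP [/eqP ->|]; first by case/andP: ha.
by move/allP: hq => H /H /andP [].
Qed.

Lemma core (s t : seq bool) (p q : seq nat) : maximal_pair s t p q ->
  (lcs s t <= lcs s (take (last 0 q) t))%N /\ (last 0 q <= size t)%N.
Proof.
move=> [[[spq sp sq ap aq] hnth] hsz].
set l := last 0 q.
have hl : (l <= size t)%N by exact: last_le.
split=> //.
set w := map (fun i => nth false s (i - 1)) p.
have ws : subseq w s.
  by apply: sub_nth.
have hw : w = map (fun j => nth false (take l t) (j - 1)) q.
  apply: (@eq_from_nth _ false); first by rewrite !size_map.
  move=> i; rewrite size_map => ip.
  rewrite /w (nth_map 0) // (nth_map 0) -?spq // !subn1 hnth //.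
  have hq : nth 0 q i \in q by apply: mem_nth; rewrite -spq.
  move/allP: aq => /(_ _ hq) /andP [a _].
  have hj := @sorted_le_last q _ sq hq.
  by rewrite nth_take //; apply: leq_trans hj; rewrite prednK.
have wt : subseq w (take l t).
  rewrite hw; apply: sub_nth => //; apply/allP => j jq.
  move/allP: aq => /(_ _ jq) /andP [a b].
  rewrite a add1n ltnS size_take_min leq_min b andbT; exact: sorted_le_last.
rewrite -hsz -(size_map (fun i => nth false s (i - 1)) p).
exact: lcs_ub.
Qed.
Theorem lemma9 (R : realType) (d : measure_display) (Omega : measurableType d)
  (P : probability Omega R)
  (Y V : nat -> Omega -> bool) (T : nat -> Omega -> nat)
  (* Y_i, V_i i.i.d. Bernoulli(1/2); T_{k+1} uniform on {2,...,k};
     all of them mutually independent *)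
  (mY : forall i, measurable_fun setT (Y i))
  (mV : forall i, measurable_fun setT (V i))
  (mT : forall i, measurable_fun setT (T i))
  (hY : forall i, (0 < i)%N -> P [set w | Y i w] = (2^-1 : R)%:E)
  (hV : forall i, (0 < i)%N -> P [set w | V i w] = (2^-1 : R)%:E)
  (hT : forall k j, (2 <= k)%N -> (2 <= j <= k)%N ->
          P [set w | T k.+1 w = j] = ((k.-1)%:R^-1 : R)%:E)
  (hind : all_independent P Y V T)
  (delta : R -> R)
  (hdelta0 : delta x @[x --> 0^'] --> 0)
  (hdelta : forall e : R, 0 < e -> exists c C : R, 0 < c /\ 0 < C /\
      forall l : nat, (0 < l)%N ->
        (P [set w | (l%:R * (1 - e) <
                   (La Y V T l (Num.truncn (2 * l%:R * (1 - delta e))) w)%:R)%R]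
        <= ((C * expR (- (c * l%:R)))%R)%:E)%E)
  (eps : R) (heps : 0 < eps)
  (hpos : 0 < 1 - delta eps)
  (hcond : 2^-1 / (1 - delta eps) < 65 / 100)
  (n : nat) :
  let E3 := [set w | forall l : nat, (20 / 100 : R) * n%:R <= l%:R -> (l <= n)%N ->
               (La Y V T l (Num.truncn (2 * l%:R * (1 - delta eps))) w)%:R
               <= (1 - eps) * l%:R] in
  let E4k := fun k : nat => [set w | (65 / 100 : R) * k%:R <= (La Y V T n k w)%:R] in
  let E4 := [set w | forall k : nat, (45 / 100 : R) * n%:R <= k%:R -> (k <= n)%N -> E4k k w] in
  let E6k := fun k : nat => [set w | forall p q : seq nat,
               minimal_pair (Zword (V ^~ w) (T ^~ w) k) (Yword (Y ^~ w) n) p q ->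
               (La Y V T n k w)%:R <= (1 - eps) * (last 0%N q)%:R] in
  let E6 := [set w | forall k : nat, (45 / 100 : R) * n%:R <= k%:R -> (k <= n)%N -> E6k k w] in
  (forall k : nat, (45 / 100 : R) * n%:R < k%:R -> (k <= n)%N -> E3 `&` E4k k `<=` E6k k)
  /\ (E3 `&` E4 `<=` E6).
Proof.
move=> E3 E4k E4 E6k E6.
have hc : 2^-1 < 65 / 100 * (1 - delta eps) :> R by rewrite -ltr_pdivrMr.
have key : forall k : nat, (45 / 100 : R) * n%:R <= k%:R -> (k <= n)%N ->
    E3 `&` E4k k `<=` E6k k.
  move=> k hk kn w [h3 h4] p q hmin.
  rewrite /E4k /= in h4.
  have [hA hB] := core _ _ _ _ hmin.1.
  rewrite size_mkseq in hB.
  set l := last 0%N q in hA hB *.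
  have hYt : take l (Yword (Y ^~ w) n) = Yword (Y ^~ w) l.
    by rewrite /Yword /mkseq -map_take take_iota (minn_idPl hB).
  rewrite hYt in hA.
  have hLl : (lcs (Zword (V^~ w) (T^~ w) k) (Yword (Y^~ w) l) <= l)%N.
    by apply: leq_trans (lcs_le_size _ _) _; rewrite size_mkseq.
  set L := La Y V T n k w.
  have hLlr : (L%:R : R) <= l%:R by rewrite ler_nat; exact: leq_trans hA hLl.
  have hn0 : (0 : R) <= n%:R by [].
  have hk0 : (0 : R) <= k%:R by [].
  have hl20 : (20 / 100 : R) * n%:R <= l%:R by lra.
  have := h3 l hl20 hB.
  set K := Num.truncn _.
  have hkK : (k <= K)%N.
    rewrite /K truncn_ge_nat; first by nra.
    by nra.
  move=> hE; apply: le_trans hE; rewrite ler_nat.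
  apply: leq_trans hA _; rewrite /La; exact: (lcs_mono _ _ _ (Zword_mono _ _ _ _ hkK)).
split.
  by move=> k hk kn; apply: key => //; exact: ltW.
by move=> w [h3 h4] k hk kn; apply: key => //; split => //; apply: h4.
Qed.
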